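(* Let $OPT$ be the optimal value of Problem (A) and $ALG$ the system throughput of the assignment output by Algorithm 1 (described below). Then $ALG\ge \frac{1}{2}\mu\cdot OPT$, where $\mu$ is defined below with respect to any partition $(C_i)$ as in the definition.
   Context: Setting: SUs $S=\{s_1,\dots,s_N\}$, channels $\{1,\dots,M\}$; SU $s_i$ has integer sensing budget $0\le l_i\le M$, and $\sum_i l_i\ge M$. For each $i,k$ let $P_f^i(k),P_m^i(k)\in[0,1]$; let $T_c\in[0,1)$, $\pi_0(k)\in[0,1]$, $\gamma(k)>0$, $\theta_1(k)=(1-T_c)\pi_0(k)$, $\theta_2(k)=\gamma(k)(1-\pi_0(k))$. For nonempty $A\subseteq S$ and $y\in\{0,1\}^A$ put $P^k_0(y)=\prod_{s_i\in A,y_i=1}P_f^i(k)\prod_{s_i\in A,y_i=0}(1-P_f^i(k))$, $P^k_1(y)=\prod_{s_i\in A,y_i=1}(1-P_m^i(k))\prod_{s_i\in A,y_i=0}P_m^i(k)$, and $U_k(A)=\sum_{y}\max\{\theta_2(k)P^k_1(y),\theta_1(k)P^k_0(y)\}$; $U_k(\emptyset)=\theta_2(k)$. A sensing assignment $(S_1,\dots,S_M)$, $S_k\subseteq S$, is feasible if each $s_i$ lies in at most $l_i$ of the $S_k$. Problem (A): maximize $\sum_k U_k(S_k)$ over feasible assignments. Algorithm 1: Build the complete bipartite graph with vertices $s_i^j$ ($i=1..N$, $j=1..l_i$; copies of SU $s_i$) on one side and channels $c_1,\dots,c_M$ on the other, edge weights $w(s_i^j,c_k)=U_k(\{s_i\})$.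 Compute a maximum weight matching $\mathcal M$; set $S_k=\{s_i:(s_i^j,c_k)\in\mathcal M\}$. For each unmatched copy $s_i^j$ in arbitrary order, add $s_i$ to $S_{k^*}$ where $k^*$ maximizes $U_k(S_k\cup\{s_i\})-U_k(S_k)$ over channels $k$ with $s_i\notin S_k$. Let $U=\sum_k U_k(S_k)$. If $\max_k U_k(S)>U$, instead output the assignment $S_{k^*}=S$ for $k^*=\arg\max_k U_k(S)$ and $S_k=\emptyset$ for $k\ne k^*$; otherwise output $(S_1,\dots,S_M)$. Parameter $\mu$: let $U_k^0=\min_{s_i\in S}U_k(\{s_i\})$, $U_k^*=\max_{s_i\in S}U_k(\{s_i\})$. Partition the channels into groups $C_i$ ($s_i\in S$), each channel $k$ placed in a group $C_i$ with $U_k(\{s_i\})\ge U_k(\{s_j\})$ for all $j\neq i$ (ties broken arbitrarily); $r_i=|C_i|$. Let $C_i^{l_i}$ be the first $\min\{l_i,r_i\}$ channels of $C_i$ when sorted by $U_k^0$ in non-increasing order. For $r_i>0$ let $\lambda_i=\min\{l_i,r_i\}/r_i$ and, when $C_i^{l_i}\ne\emptyset$, $\rho_i=\min_{k\in C_i^{l_i}}U_k^*/U_k^0$. Then $\mu=1+\min_i\lambda_i(\rho_i-1)$ (so $\mu\in[1,2]$). *)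

(* Defs.v *)
From HB Require Import structures.
From mathcomp Require Import all_boot all_order all_algebra.
Set Implicit Arguments. Unset Strict Implicit. Unset Printing Implicit Defensive.
Import Order.TTheory GRing.Theory Num.Theory.
Local Open Scope ring_scope.

(* SUs are 'I_N, channels are 'I_M. A subset A of SUs is a {set 'I_N};
   a vector y in {0,1}^A is represented by the subset Y = {i in A | y_i = 1}. *)

Definition theta1 {R : realFieldType} {M : nat} (Tc : R) (pi0 : 'I_M -> R)
  (k : 'I_M) : R := (1 - Tc) * pi0 k.
Definition theta2 {R : realFieldType} {M : nat} (gamma pi0 : 'I_M -> R)
  (k : 'I_M) : R := gamma k * (1 - pi0 k).

Definition P0 {R : realFieldType} {N M : nat} (Pf : 'I_N -> 'I_M -> R)
  (k : 'I_M) (A Y : {set 'I_N}) : R :=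
  (\prod_(i in Y) Pf i k) * \prod_(i in A :\: Y) (1 - Pf i k).
Definition P1 {R : realFieldType} {N M : nat} (Pm : 'I_N -> 'I_M -> R)
  (k : 'I_M) (A Y : {set 'I_N}) : R :=
  (\prod_(i in Y) (1 - Pm i k)) * \prod_(i in A :\: Y) Pm i k.

Definition Uk {R : realFieldType} {N M : nat} (Pf Pm : 'I_N -> 'I_M -> R)
  (Tc : R) (pi0 gamma : 'I_M -> R) (k : 'I_M) (A : {set 'I_N}) : R :=
  if A == set0 then theta2 gamma pi0 k
  else \sum_(Y in powerset A)
         Num.max (theta2 gamma pi0 k * P1 Pm k A Y) (theta1 Tc pi0 k * P0 Pf k A Y).

(* minimum / maximum of f over a finite set A (the true min/max when A is
   nonempty; the default values are irrelevant then). *)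
Definition minover {R : realFieldType} {T : finType} (A : {set T}) (f : T -> R) : R :=
  \big[Num.min/ \big[Num.max/0]_(x in A) f x]_(x in A) f x.
Definition maxover {R : realFieldType} {T : finType} (A : {set T}) (f : T -> R) : R :=
  \big[Num.max/ \big[Num.min/0]_(x in A) f x]_(x in A) f x.

Definition assignment (N M : nat) := {ffun 'I_M -> {set 'I_N}}.

Definition feasible {N M : nat} (l : 'I_N -> nat) (S : assignment N M) : bool :=
  [forall i : 'I_N, #|[set k | i \in S k]| <= l i]%N.

Definition throughput {R : realFieldType} {N M : nat}
  (Uf : 'I_M -> {set 'I_N} -> R) (S : assignment N M) : R :=
  \sum_(k : 'I_M) Uf k (S k).

Definition OPT {R : realFieldType} {N M : nat}
  (Uf : 'I_M -> {set 'I_N} -> R) (l : 'I_N -> nat) : R :=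
  \big[Num.max/0]_(S : {ffun 'I_M -> {set 'I_N}} | feasible l S) throughput Uf S.

(* Copies s_i^j: pairs (i, j) with j < l_i (0-based copy index). *)
Definition matching {N M : nat} (l : 'I_N -> nat)
  (m : {ffun 'I_M -> option ('I_N * 'I_M)}) : Prop :=
  (forall k c, m k = Some c -> (nat_of_ord c.2 < l c.1)%N) /\
  (forall k k' c, m k = Some c -> m k' = Some c -> k = k').

Definition weight {R : realFieldType} {N M : nat}
  (Uf : 'I_M -> {set 'I_N} -> R) (m : {ffun 'I_M -> option ('I_N * 'I_M)}) : R :=
  \sum_(k : 'I_M) (if m k is Some c then Uf k [set c.1] else 0).

Definition max_weight_matching {R : realFieldType} {N M : nat}
  (Uf : 'I_M -> {set 'I_N} -> R) (l : 'I_N -> nat)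
  (m : {ffun 'I_M -> option ('I_N * 'I_M)}) : Prop :=
  matching l m /\ forall m', matching l m' -> weight Uf m' <= weight Uf m.

Definition matched_assign {N M : nat} (m : {ffun 'I_M -> option ('I_N * 'I_M)})
  : assignment N M := [ffun k => if m k is Some c then [set c.1] else set0].

Definition unmatched {N M : nat} (l : 'I_N -> nat)
  (m : {ffun 'I_M -> option ('I_N * 'I_M)}) (c : 'I_N * 'I_M) : bool :=
  (nat_of_ord c.2 < l c.1)%N && [forall k, m k != Some c].

Definition greedy_step {R : realFieldType} {N M : nat}
  (Uf : 'I_M -> {set 'I_N} -> R) (S : assignment N M) (i : 'I_N)
  (S' : assignment N M) : Prop :=
  (exists2 k, i \notin S k &
     (forall k', i \notin S k' ->
        Uf k' (i |: S k') - Uf k' (S k') <= Uf k (i |: S k) - Uf k (S k)) /\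
     S' = [ffun k'' => if k'' == k then i |: S k'' else S k''])
  \/ ((forall k, i \in S k) /\ S' = S).

Inductive greedy_run {R : realFieldType} {N M : nat}
  (Uf : 'I_M -> {set 'I_N} -> R) :
  assignment N M -> seq ('I_N * 'I_M) -> assignment N M -> Prop :=
| greedy_nil S : greedy_run Uf S [::] S
| greedy_cons S c cs S' S'' :
    greedy_step Uf S c.1 S' -> greedy_run Uf S' cs S'' -> greedy_run Uf S (c :: cs) S''.

(* T is a possible output of Algorithm 1 (for some max-weight matching, some
   processing order of the unmatched copies and some tie-breaking). *)
Definition alg1_output {R : realFieldType} {N M : nat}
  (Uf : 'I_M -> {set 'I_N} -> R) (l : 'I_N -> nat) (T : assignment N M) : Prop :=
  exists (m : {ffun 'I_M -> option ('I_N * 'I_M)}) (ord : seq ('I_N * 'I_M))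
         (Sfin : assignment N M),
    [/\ max_weight_matching Uf l m,
        uniq ord /\ (forall c, (c \in ord) = unmatched l m c),
        greedy_run Uf (matched_assign m) ord Sfin &
        (if throughput Uf Sfin < maxover [set: 'I_M] (fun k => Uf k [set: 'I_N])
         then exists kstar : 'I_M,
                (forall k, Uf k [set: 'I_N] <= Uf kstar [set: 'I_N]) /\
                T = [ffun k => if k == kstar then [set: 'I_N] else set0]
         else T = Sfin)].

Definition U1 {R : realFieldType} {N M : nat}
  (Uf : 'I_M -> {set 'I_N} -> R) (k : 'I_M) (i : 'I_N) : R := Uf k [set i].
Definition U0 {R : realFieldType} {N M : nat}
  (Uf : 'I_M -> {set 'I_N} -> R) (k : 'I_M) : R := minover [set: 'I_N] (U1 Uf k).
Definition Ustar {R : realFieldType} {N M : nat}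
  (Uf : 'I_M -> {set 'I_N} -> R) (k : 'I_M) : R := maxover [set: 'I_N] (U1 Uf k).

(* g k = the index i of the group C_i containing channel k *)
Definition valid_partition {R : realFieldType} {N M : nat}
  (Uf : 'I_M -> {set 'I_N} -> R) (g : 'I_M -> 'I_N) : Prop :=
  forall k j, U1 Uf k j <= U1 Uf k (g k).

Definition Cgrp {N M : nat} (g : 'I_M -> 'I_N) (i : 'I_N) : {set 'I_M} :=
  [set k | g k == i].
Definition rgrp {N M : nat} (g : 'I_M -> 'I_N) (i : 'I_N) : nat := #|Cgrp g i|.

(* Cl i = C_i^{l_i}: the first min(l_i, r_i) channels of C_i in some
   non-increasing order of U_k^0. *)
Definition valid_top {R : realFieldType} {N M : nat}
  (Uf : 'I_M -> {set 'I_N} -> R) (l : 'I_N -> nat) (g : 'I_M -> 'I_N)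
  (Cl : 'I_N -> {set 'I_M}) : Prop :=
  forall i, [/\ Cl i \subset Cgrp g i,
                #|Cl i| = minn (l i) (rgrp g i) &
                forall k k', k \in Cl i -> k' \in Cgrp g i :\: Cl i ->
                  U0 Uf k' <= U0 Uf k].

Definition lambda {R : realFieldType} {N M : nat} (l : 'I_N -> nat)
  (g : 'I_M -> 'I_N) (i : 'I_N) : R :=
  (minn (l i) (rgrp g i))%:R / (rgrp g i)%:R.

Definition rho {R : realFieldType} {N M : nat}
  (Uf : 'I_M -> {set 'I_N} -> R) (Cl : 'I_N -> {set 'I_M}) (i : 'I_N) : R :=
  minover (Cl i) (fun k => Ustar Uf k / U0 Uf k).

(* lambda_i (rho_i - 1); when C_i^{l_i} is empty (l_i = 0) lambda_i = 0, so the
   term is 0. *)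
Definition mu_term {R : realFieldType} {N M : nat}
  (Uf : 'I_M -> {set 'I_N} -> R) (l : 'I_N -> nat) (g : 'I_M -> 'I_N)
  (Cl : 'I_N -> {set 'I_M}) (i : 'I_N) : R :=
  if Cl i == set0 then 0 else lambda l g i * (rho Uf Cl i - 1).

Definition mu {R : realFieldType} {N M : nat}
  (Uf : 'I_M -> {set 'I_N} -> R) (l : 'I_N -> nat) (g : 'I_M -> 'I_N)
  (Cl : 'I_N -> {set 'I_M}) : R :=
  1 + minover [set i | (0 < rgrp g i)%N] (mu_term Uf l g Cl).

(* Main.v *)
Require Import Defs.
From HB Require Import structures.
From mathcomp Require Import all_boot all_order all_algebra.
From mathcomp Require Import ring lra.
Import Order.TTheory GRing.Theory Num.Theory.
Set Implicit Arguments. Unset Strict Implicit.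
Local Open Scope ring_scope.

Lemma set_induct (T : finType) (P : {set T} -> Prop) :
  P set0 -> (forall (i : T) (A : {set T}), i \notin A -> P A -> P (i |: A)) -> forall A, P A.
Proof.
move=> P0 PS A; move: {2}#|A| (erefl #|A|) => n; elim: n A => [|n IH] A hA.
  by move/eqP: hA; rewrite cards_eq0 => /eqP ->.
have /set0Pn [x xA] : A != set0 by rewrite -card_gt0 hA.
rewrite -(setD1K xA); apply: PS; first by rewrite !inE eqxx.
by apply: IH; move: hA; rewrite (cardsD1 x) xA add1n => -[].
Qed.

Lemma split_pow (R : realFieldType) N (F : {set 'I_N} -> R) (i : 'I_N) (A : {set 'I_N}) :
  i \notin A ->
  \sum_(Y in powerset (i |: A)) F Y = \sum_(Z in powerset A) (F Z + F (i |: Z)).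
Proof.
move=> iA.
rewrite (bigID (fun Y : {set 'I_N} => i \in Y)) /= addrC big_split /=; congr (_ + _).
  apply: eq_bigl => Y; rewrite !powersetE; apply/idP/idP.
    case/andP => sub niY; apply/subsetP=> x xY; have:= subsetP sub x xY.
    by rewrite !inE; case/orP=> // /eqP ex; subst x; rewrite xY in niY.
  move=> sub; rewrite (subset_trans sub) ?subsetUr //=; apply/negP=> iY.
  by rewrite (subsetP sub _ iY) in iA.
rewrite (reindex_onto (fun Z => i |: Z) (fun Y => Y :\ i)) /=; last first.
  by move=> Y /andP [_ iY]; rewrite setD1K.
apply: eq_bigl => Z; rewrite !powersetE !inE eqxx /=.
apply/idP/idP.
  case/andP=> /andP [sub _] /eqP eZ; apply/subsetP => x xZ.
  have : x \in (i |: Z) :\ i by rewrite eZ.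
  rewrite !inE => /andP [xi _]; have := subsetP sub x; rewrite !inE xZ orbT.
  by move=> /(_ isT); rewrite (negbTE xi).
move=> sub; rewrite setUS //=; apply/eqP/setP => x; rewrite !inE.
case: eqP => // -> /=; apply/esym/negP=> iZ; by rewrite (subsetP sub _ iZ) in iA.
Qed.

Lemma notinsub N (i : 'I_N) (A Z : {set 'I_N}) : i \notin A -> Z \subset A -> i \notin Z.
Proof. by move=> iA sZ; apply/negP=> iZ; rewrite (subsetP sZ _ iZ) in iA. Qed.

Lemma setDU1a N (i : 'I_N) (A Z : {set 'I_N}) :
  i \notin A -> Z \subset A -> (i |: A) :\: Z = i |: (A :\: Z).
Proof.
move=> iA sZ; apply/setP=> x; rewrite !inE; case: eqP => // -> /=.
by rewrite (notinsub iA sZ) ?andbT.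
Qed.

Lemma setDU1b N (i : 'I_N) (A Z : {set 'I_N}) :
  i \notin A -> (i |: A) :\: (i |: Z) = A :\: Z.
Proof.
move=> iA; apply/setP=> x; rewrite !inE; case: eqP => // -> /=.
by rewrite (negbTE iA) andbF.
Qed.

Lemma notinD N (i : 'I_N) (A Z : {set 'I_N}) : i \notin A -> i \notin A :\: Z.
Proof. by move=> iA; rewrite !inE (negbTE iA) andbF. Qed.


Lemma P1a (R : realFieldType) N M (Pm : 'I_N -> 'I_M -> R) (k : 'I_M) (i : 'I_N) (A Z : {set 'I_N}) :
  i \notin A -> Z \subset A -> P1 Pm k (i |: A) Z = P1 Pm k A Z * Pm i k.
Proof.
move=> iA sZ; rewrite /P1 setDU1a // big_setU1 ?notinD //=; ring.
Qed.
Lemma P1b (R : realFieldType) N M (Pm : 'I_N -> 'I_M -> R) (k : 'I_M) (i : 'I_N) (A Z : {set 'I_N}) :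
  i \notin A -> Z \subset A -> P1 Pm k (i |: A) (i |: Z) = P1 Pm k A Z * (1 - Pm i k).
Proof.
move=> iA sZ; rewrite /P1 setDU1b // big_setU1 ?(notinsub iA sZ) //=; ring.
Qed.
Lemma P0a (R : realFieldType) N M (Pf : 'I_N -> 'I_M -> R) (k : 'I_M) (i : 'I_N) (A Z : {set 'I_N}) :
  i \notin A -> Z \subset A -> P0 Pf k (i |: A) Z = P0 Pf k A Z * (1 - Pf i k).
Proof.
move=> iA sZ; rewrite /P0 setDU1a // big_setU1 ?notinD //=; ring.
Qed.
Lemma P0b (R : realFieldType) N M (Pf : 'I_N -> 'I_M -> R) (k : 'I_M) (i : 'I_N) (A Z : {set 'I_N}) :
  i \notin A -> Z \subset A -> P0 Pf k (i |: A) (i |: Z) = P0 Pf k A Z * Pf i k.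
Proof.
move=> iA sZ; rewrite /P0 setDU1b // big_setU1 ?(notinsub iA sZ) //=; ring.
Qed.

Lemma P1_ge0 (R : realFieldType) N M (Pm : 'I_N -> 'I_M -> R) (k : 'I_M) (A Y : {set 'I_N}) :
  (forall i k, 0 <= Pm i k <= 1) -> 0 <= P1 Pm k A Y.
Proof.
move=> h; rewrite /P1 mulr_ge0 // prodr_ge0 // => i _; have /andP[h1 h2] := h i k; lra.
Qed.
Lemma P0_ge0 (R : realFieldType) N M (Pf : 'I_N -> 'I_M -> R) (k : 'I_M) (A Y : {set 'I_N}) :
  (forall i k, 0 <= Pf i k <= 1) -> 0 <= P0 Pf k A Y.
Proof.
move=> h; rewrite /P0 mulr_ge0 // prodr_ge0 // => i _; have /andP[h1 h2] := h i k; lra.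
Qed.

Lemma key_low (R : realFieldType) (a b p q : R) :
  0 <= a -> 0 <= b -> 0 <= p <= 1 -> 0 <= q <= 1 ->
  Num.max a b <= Num.max (a * p) (b * (1 - q)) + Num.max (a * (1 - p)) (b * q).
Proof.
move=> ha hb /andP[hp1 hp2] /andP[hq1 hq2]; rewrite ge_max; apply/andP; split.
  apply: (@le_trans _ _ (a * p + a * (1 - p))); first by rewrite -mulrDr addrC subrK mulr1.
  by apply: lerD; rewrite le_max lexx.
apply: (@le_trans _ _ (b * (1 - q) + b * q)); first by rewrite -mulrDr subrK mulr1.
by apply: lerD; rewrite le_max lexx ?orbT.
Qed.

Lemma key_low' (R : realFieldType) (a b c d p q : R) :
  0 <= a * c -> 0 <= b * d -> 0 <= p <= 1 -> 0 <= q <= 1 ->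
  Num.max (a * c) (b * d) <= Num.max (a * (c * p)) (b * (d * (1 - q))) + Num.max (a * (c * (1 - p))) (b * (d * q)).
Proof. by move=> *; rewrite !mulrA; apply: key_low. Qed.

Lemma max_le_add (R : realFieldType) (x y : R) : 0 <= x -> 0 <= y -> Num.max x y <= x + y.
Proof. move=> hx hy; rewrite ge_max; apply/andP; split; lra. Qed.

Definition Vs (R : realFieldType) N M (Pf Pm : 'I_N -> 'I_M -> R) (t1 t2 : R)
  (k : 'I_M) (A : {set 'I_N}) : R :=
  \sum_(Y in powerset A) Num.max (t2 * P1 Pm k A Y) (t1 * P0 Pf k A Y).
Definition Ws (R : realFieldType) N M (Pf Pm : 'I_N -> 'I_M -> R) (t1 t2 : R)
  (k : 'I_M) (A : {set 'I_N}) : R :=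
  \sum_(Y in powerset A) (t2 * P1 Pm k A Y + t1 * P0 Pf k A Y).

Lemma P1_00 (R : realFieldType) N M (Pm : 'I_N -> 'I_M -> R) k : P1 Pm k set0 set0 = 1.
Proof. by rewrite /P1 setDv !big_set0 mulr1. Qed.
Lemma P0_00 (R : realFieldType) N M (Pm : 'I_N -> 'I_M -> R) k : P0 Pm k set0 set0 = 1.
Proof. by rewrite /P0 setDv !big_set0 mulr1. Qed.

Lemma Vs0 (R : realFieldType) N M (Pf Pm : 'I_N -> 'I_M -> R) t1 t2 k :
  Vs Pf Pm t1 t2 k set0 = Num.max t2 t1.
Proof. by rewrite /Vs powerset0 big_set1 P1_00 P0_00 !mulr1. Qed.
Lemma Ws0 (R : realFieldType) N M (Pf Pm : 'I_N -> 'I_M -> R) t1 t2 k :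
  Ws Pf Pm t1 t2 k set0 = t2 + t1.
Proof. by rewrite /Ws powerset0 big_set1 P1_00 P0_00 !mulr1. Qed.

Lemma Vs_mono (R : realFieldType) N M (Pf Pm : 'I_N -> 'I_M -> R) (t1 t2 : R) (k : 'I_M) (i : 'I_N) (A : {set 'I_N}) :
  (forall i k, 0 <= Pf i k <= 1) -> (forall i k, 0 <= Pm i k <= 1) ->
  0 <= t1 -> 0 <= t2 -> i \notin A ->
  Vs Pf Pm t1 t2 k A <= Vs Pf Pm t1 t2 k (i |: A).
Proof.
move=> hf hm h1 h2 iA; rewrite /Vs split_pow //; apply: ler_sum => Z.
rewrite powersetE => sZ.
rewrite P1a // P1b // P0a // P0b // .
apply: key_low'; [apply: mulr_ge0 => //; exact: P1_ge0 | apply: mulr_ge0 => //; exact: P0_ge0 | exact: hm | exact: hf].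
Qed.

Lemma Ws_const (R : realFieldType) N M (Pf Pm : 'I_N -> 'I_M -> R) (t1 t2 : R) (k : 'I_M) (A : {set 'I_N}) :
  Ws Pf Pm t1 t2 k A = t2 + t1.
Proof.
elim/set_induct: A => [|i A iA IH]; first by rewrite Ws0.
rewrite -IH /Ws split_pow //; apply: eq_bigr => Z; rewrite powersetE => sZ.
rewrite P1a // P1b // P0a // P0b //; ring.
Qed.

Lemma Vs_le (R : realFieldType) N M (Pf Pm : 'I_N -> 'I_M -> R) (t1 t2 : R) (k : 'I_M) (A : {set 'I_N}) :
  (forall i k, 0 <= Pf i k <= 1) -> (forall i k, 0 <= Pm i k <= 1) ->
  0 <= t1 -> 0 <= t2 -> Vs Pf Pm t1 t2 k A <= t2 + t1.
Proof.
move=> hf hm h1 h2; rewrite -(Ws_const Pf Pm t1 t2 k A); apply: ler_sum => Y _.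
by apply: max_le_add; rewrite mulr_ge0 ?P1_ge0 ?P0_ge0.
Qed.

Lemma Vs_ge (R : realFieldType) N M (Pf Pm : 'I_N -> 'I_M -> R) (t1 t2 : R) (k : 'I_M) (A : {set 'I_N}) :
  (forall i k, 0 <= Pf i k <= 1) -> (forall i k, 0 <= Pm i k <= 1) ->
  0 <= t1 -> 0 <= t2 -> Num.max t2 t1 <= Vs Pf Pm t1 t2 k A.
Proof.
move=> hf hm h1 h2; elim/set_induct: A => [|i A iA IH]; first by rewrite Vs0.
apply: (le_trans IH); exact: Vs_mono.
Qed.


Lemma th_facts (R : realFieldType) M (Tc : R) (pi0 gamma : 'I_M -> R) (k : 'I_M) :
  0 <= Tc < 1 -> (forall k, 0 <= pi0 k <= 1) -> (forall k, 0 < gamma k) ->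
  [/\ 0 <= theta1 Tc pi0 k, 0 <= theta2 gamma pi0 k &
      0 < Num.max (theta2 gamma pi0 k) (theta1 Tc pi0 k)].
Proof.
move=> /andP[t1 t2] hp hg; have /andP[p1 p2] := hp k; have g1 := hg k.
rewrite /theta1 /theta2; split; try nra.
have : 0 < (1 - Tc) * pi0 k + gamma k * (1 - pi0 k).
  by case: (lerP (1/2) (pi0 k)) => h; nra.
move=> h; rewrite lt_max; apply/negPn/negP; rewrite negb_or -!leNgt => /andP[a b]; nra.
Qed.

Definition Hyp (R : realFieldType) N M (Pf Pm : 'I_N -> 'I_M -> R) (Tc : R)
  (pi0 gamma : 'I_M -> R) : Prop :=
  [/\ (forall i k, 0 <= Pf i k <= 1), (forall i k, 0 <= Pm i k <= 1),
      0 <= Tc < 1, (forall k, 0 <= pi0 k <= 1) & (forall k, 0 < gamma k)].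

Lemma U_ge0 (R : realFieldType) N M (Pf Pm : 'I_N -> 'I_M -> R) Tc pi0 gamma k A :
  Hyp Pf Pm Tc pi0 gamma -> 0 <= Uk Pf Pm Tc pi0 gamma k A.
Proof.
case=> hf hm ht hp hg; have [a b c] := th_facts k ht hp hg.
rewrite /Uk; case: ifP => // _; apply: le_trans (ltW c) _; exact: Vs_ge.
Qed.

Lemma U_le (R : realFieldType) N M (Pf Pm : 'I_N -> 'I_M -> R) Tc pi0 gamma k A :
  Hyp Pf Pm Tc pi0 gamma ->
  Uk Pf Pm Tc pi0 gamma k A <= theta2 gamma pi0 k + theta1 Tc pi0 k.
Proof.
case=> hf hm ht hp hg; have [a b c] := th_facts k ht hp hg.
rewrite /Uk; case: ifP => _; last exact: Vs_le.
by rewrite lerDl.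
Qed.

Lemma U1_ge (R : realFieldType) N M (Pf Pm : 'I_N -> 'I_M -> R) Tc pi0 gamma k i :
  Hyp Pf Pm Tc pi0 gamma ->
  Num.max (theta2 gamma pi0 k) (theta1 Tc pi0 k) <= Uk Pf Pm Tc pi0 gamma k [set i].
Proof.
case=> hf hm ht hp hg; have [a b c] := th_facts k ht hp hg.
rewrite /Uk; have -> : ([set i] == set0) = false.
  by apply/negbTE/set0Pn; exists i; rewrite !inE eqxx.
exact: Vs_ge.
Qed.

Lemma U_mono (R : realFieldType) N M (Pf Pm : 'I_N -> 'I_M -> R) Tc pi0 gamma k i A :
  Hyp Pf Pm Tc pi0 gamma ->
  Uk Pf Pm Tc pi0 gamma k A <= Uk Pf Pm Tc pi0 gamma k (i |: A).
Proof.
move=> H; case: (boolP (i \in A)) => iA; first by rewrite (setUidPr _) // sub1set.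
case: H => hf hm ht hp hg; have [a b c] := th_facts k ht hp hg.
rewrite /Uk; have -> : (i |: A == set0) = false.
  by apply/negbTE/set0Pn; exists i; rewrite !inE eqxx.
case: eqP => _; last exact: Vs_mono.
have := Vs_ge k (i |: A) hf hm a b; apply: le_trans; by rewrite le_max lexx.
Qed.

Lemma bigmax_ge_seq (R : realFieldType) (T : eqType) (r : seq T) (P : pred T) (f : T -> R) d x :
  x \in r -> P x -> f x <= \big[Num.max/d]_(y <- r | P y) f y.
Proof.
elim: r => // a r IH; rewrite inE big_cons; case/orP => [/eqP->|xr] Px.
  by rewrite Px le_max lexx.
by case: ifP => _; [rewrite le_max IH ?orbT | exact: IH].
Qed.

Lemma bigmin_le_seq (R : realFieldType) (T : eqType) (r : seq T) (P : pred T) (f : T -> R) d x :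
  x \in r -> P x -> \big[Num.min/d]_(y <- r | P y) f y <= f x.
Proof.
elim: r => // a r IH; rewrite inE big_cons; case/orP => [/eqP->|xr] Px.
  by rewrite Px ge_min lexx.
by case: ifP => _; [rewrite ge_min IH ?orbT | exact: IH].
Qed.

Lemma minover_le (R : realFieldType) (T : finType) (A : {set T}) (f : T -> R) x :
  x \in A -> minover A f <= f x.
Proof. by move=> xA; apply: bigmin_le_seq; rewrite ?mem_index_enum. Qed.

Lemma maxover_ge (R : realFieldType) (T : finType) (A : {set T}) (f : T -> R) x :
  x \in A -> f x <= maxover A f.
Proof. by move=> xA; apply: bigmax_ge_seq; rewrite ?mem_index_enum. Qed.

Lemma minover_ge (R : realFieldType) (T : finType) (A : {set T}) (f : T -> R) c x0 :
  x0 \in A -> (forall x, x \in A -> c <= f x) -> c <= minover A f.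
Proof.
move=> x0A h; rewrite /minover; apply: (big_ind (fun y => c <= y)).
- apply: le_trans (h _ x0A) _; apply: bigmax_ge_seq; rewrite ?mem_index_enum //.
- by move=> x y hx hy; rewrite le_min hx hy.
- exact: h.
Qed.

Lemma minover_ge0 (R : realFieldType) (T : finType) (A : {set T}) (f : T -> R) :
  (forall x, x \in A -> 0 <= f x) -> 0 <= minover A f.
Proof.
move=> h; rewrite /minover; apply: (big_ind (fun y => 0 <= y)).
- apply: (big_ind (fun y => 0 <= y)) => //.
  by move=> x y hx hy; rewrite le_max hx.
- by move=> x y hx hy; rewrite le_min hx hy.
- exact: h.
Qed.

Lemma maxover_le (R : realFieldType) (T : finType) (A : {set T}) (f : T -> R) c x0 :
  x0 \in A -> (forall x, x \in A -> f x <= c) -> maxover A f <= c.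
Proof.
move=> x0A h; rewrite /maxover; apply: (big_ind (fun y => y <= c)).
- apply: le_trans (h _ x0A); apply: bigmin_le_seq; rewrite ?mem_index_enum //.
- by move=> x y hx hy; rewrite ge_max hx hy.
- exact: h.
Qed.

Lemma avg (R : realFieldType) (T : finType) (C Cl : {set T}) (u : T -> R) :
  Cl \subset C -> (0 < #|C|)%N ->
  (forall x y, x \in Cl -> y \in C :\: Cl -> u y <= u x) ->
  (#|Cl|)%:R / (#|C|)%:R * \sum_(k in C) u k <= \sum_(k in Cl) u k.
Proof.
move=> sub rpos h.
have eC : #|C| = (#|Cl| + #|C :\: Cl|)%N by rewrite -(cardsID Cl C) (setIidPr sub).
have eS : \sum_(k in C) u k = \sum_(k in Cl) u k + \sum_(k in C :\: Cl) u k.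
  by rewrite (big_setID Cl) /= (setIidPr sub).
have key : \sum_(x in Cl) \sum_(y in C :\: Cl) u y <= \sum_(x in Cl) \sum_(y in C :\: Cl) u x.
  by apply: ler_sum => x xCl; apply: ler_sum => y yD; exact: h.
have e1 : \sum_(x in Cl) \sum_(y in C :\: Cl) u x = (\sum_(x in Cl) u x) *+ #|C :\: Cl|.
  by rewrite -sumrMnl; apply: eq_bigr => x _; rewrite sumr_const.
rewrite e1 sumr_const in key.
have rp : (0 : R) < (#|C|)%:R by rewrite ltr0n.
rewrite mulrAC ler_pdivrMr // eS eC natrD.
move: key.
set a := \sum_(k in Cl) u k; set b := \sum_(k in C :\: Cl) u k.
rewrite -[a *+ _]mulr_natr -[b *+ _]mulr_natr.
set c : R := (#|Cl|)%:R; set d : R := (#|C :\: Cl|)%:R => key.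
by rewrite mulrDr mulrDr [c * a]mulrC lerD2l mulrC.
Qed.

Lemma card_range M a b : (a <= b <= M)%N -> #|[set j : 'I_M | (a <= j < b)%N]| = (b - a)%N.
Proof.
case/andP=> ab bM.
rewrite -sum1_card big_mkcond /=.
rewrite (eq_bigr (fun j : 'I_M => if (a <= j < b)%N then 1%N else 0%N)); last by move=> j _; rewrite inE.
rewrite -(big_mkord xpredT (fun j => if (a <= j < b)%N then 1%N else 0%N)).
rewrite (@big_cat_nat _ _ _ a 0 M) ?(leq_trans ab bM) //=.
rewrite (@big_cat_nat _ _ _ b a M) //=.
rewrite (eq_big_nat _ _ (F2 := fun _ => 0%N)); last first.
  by move=> j /andP [_ ja]; rewrite leqNgt ja.
rewrite [X in (_ + (X + _))%N](eq_big_nat _ _ (F2 := fun _ => 1%N)); last first.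
  by move=> j ->.
rewrite [X in (_ + (_ + X))%N](eq_big_nat _ _ (F2 := fun _ => 0%N)); last first.
  by move=> j /andP [bj _]; rewrite [(j < b)%N]ltnNge bj andbF.
by rewrite !sum_nat_const_nat !muln0 muln1 add0n addn0.
Qed.

Lemma card_E N M (l : 'I_N -> nat) (c : 'I_N -> nat) :
  (forall i, c i <= l i <= M)%N ->
  (#|[set p : 'I_N * 'I_M | (c p.1 <= p.2 < l p.1)%N]| + \sum_i c i)%N = \sum_i l i.
Proof.
move=> h.
rewrite -sum1_card big_mkcond /=.
have -> : (\sum_(p : 'I_N * 'I_M) (if p \in [set p : 'I_N * 'I_M | (c p.1 <= p.2 < l p.1)%N] then 1 else 0)
   = \sum_i \sum_(j : 'I_M) (if (c i <= j < l i) then 1 else 0))%N.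
  by rewrite pair_big /=; apply: eq_big => // -[i j]; rewrite inE.
rewrite -big_split /=; apply: eq_bigr => i _.
have -> : (\sum_(j : 'I_M) (if (c i <= j < l i) then 1 else 0))%N = #|[set j : 'I_M | (c i <= j < l i)%N]|.
  by rewrite -sum1_card [RHS]big_mkcond /=; apply: eq_bigr => j _; rewrite inE.
by rewrite card_range ?h // subnK //; case/andP: (h i).
Qed.

Lemma card_D N M (g : 'I_M -> 'I_N) (Cl : 'I_N -> {set 'I_M}) :
  (forall i, Cl i \subset Cgrp g i) ->
  (#|[set k : 'I_M | k \notin Cl (g k)]| + \sum_i #|Cl i|)%N = M.
Proof.
move=> hs.
have -> : \sum_i #|Cl i| = #|~: [set k : 'I_M | k \notin Cl (g k)]|.
  rewrite -sum1_card big_mkcond /= (partition_big g xpredT) //=.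
  apply: eq_bigr => i _; rewrite -sum1_card big_mkcond /= [RHS]big_mkcond /=.
  apply: eq_bigr => k _; rewrite !inE negbK.
  case: (boolP (k \in Cl i)) => kC.
    by have := subsetP (hs i) k kC; rewrite inE => /eqP e; rewrite e kC eqxx.
  by case: eqP => [e|]; rewrite ?e ?(negbTE kC) ?andbF.
by rewrite cardsC card_ord.
Qed.

From mathcomp Require Import zify.

Lemma arith1 (a b c d M : nat) : (a + c)%N = M -> (b + c)%N = d -> (M <= d)%N -> (a <= b)%N.
Proof. lia. Qed.

Lemma exists_matching N M (l : 'I_N -> nat) (g : 'I_M -> 'I_N) (Cl : 'I_N -> {set 'I_M}) :
  (forall i, l i <= M)%N -> (M <= \sum_i l i)%N ->
  (forall i, Cl i \subset Cgrp g i) -> (forall i, #|Cl i| <= l i)%N ->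
  exists m : {ffun 'I_M -> option ('I_N * 'I_M)}, matching l m /\
    forall k, exists c, m k = Some c /\ (k \in Cl (g k) -> c.1 = g k).
Proof.
move=> hl hs hsub hc.
set D := [set k : 'I_M | k \notin Cl (g k)].
set E := [set p : 'I_N * 'I_M | (#|Cl p.1| <= p.2 < l p.1)%N].
have cDE : (#|D| <= #|E|)%N.
  have h1 := card_D hsub.
  have h2 := @card_E N M l (fun i => #|Cl i|) (fun i => introT andP (conj (hc i) (hl i))).
  rewrite -/D in h1; rewrite -/E /= in h2.
  have eq1 : (\sum_i #|Cl i|)%N = (\sum_(i < N) #|Cl i|)%N := erefl.
  rewrite eq1 in h1; move: h1 h2 hs; apply: arith1.
pose f k : 'I_N * 'I_M := if k \in Cl (g k)
  then (g k, insubd k (index k (enum (Cl (g k)))))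
  else nth (g k, k) (enum E) (index k (enum D)).
have fA : forall k, k \in Cl (g k) ->
   [/\ (f k).1 = g k, val (f k).2 = index k (enum (Cl (g k))) &
       (index k (enum (Cl (g k))) < #|Cl (g k)|)%N].
  move=> k kC; have ilt : (index k (enum (Cl (g k))) < #|Cl (g k)|)%N.
    by rewrite cardE index_mem mem_enum.
  rewrite /f kC /=; split => //; rewrite val_insubd.
  by rewrite (leq_trans ilt (leq_trans (hc _) (hl _))).
have fB : forall k, k \notin Cl (g k) ->
   [/\ f k \in E, f k = nth (g k, k) (enum E) (index k (enum D)) &
       (index k (enum D) < size (enum E))%N].
  move=> k kC; have ilt : (index k (enum D) < size (enum E))%N.
    by rewrite -cardE; apply: (leq_trans _ cDE); rewrite cardE index_mem mem_enum inE.
  rewrite /f (negbTE kC); split => //; by rewrite -mem_enum mem_nth.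
exists [ffun k => Some (f k)]; split; last first.
  by move=> k; exists (f k); rewrite ffunE; split => // kC; case: (fA k kC).
split.
  move=> k c; rewrite ffunE => -[<-].
  case: (boolP (k \in Cl (g k))) => kC.
    case: (fA k kC) => e1 e2 e3; rewrite e1 e2; apply: leq_trans e3 (hc _).
  by case: (fB k kC) => /[swap] _ /[swap] _; rewrite inE => /andP[].
move=> k k' c; rewrite !ffunE => -[<-] [e].
case: (boolP (k \in Cl (g k))) => kC; case: (boolP (k' \in Cl (g k'))) => kC'.
- case: (fA k kC) => a1 a2 a3; case: (fA k' kC') => b1 b2 b3.
  have eg : g k' = g k by rewrite -b1 e a1.
  have ei : index k (enum (Cl (g k))) = index k' (enum (Cl (g k))).
    by rewrite -a2 -eg -b2 e.
  have h1 : nth k (enum (Cl (g k))) (index k (enum (Cl (g k)))) = k by rewrite nth_index // mem_enum.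
  have h2 : nth k (enum (Cl (g k))) (index k' (enum (Cl (g k)))) = k' by rewrite nth_index // mem_enum -eg.
  by rewrite -[LHS]h1 -[RHS]h2 ei.
- case: (fA k kC) => a1 a2 a3; case: (fB k' kC') => b1 _ _.
  move: b1; rewrite e inE a1 a2 => /andP [b1 _]; lia.
- case: (fB k kC) => a1 _ _; case: (fA k' kC') => b1 b2 b3.
  move: a1; rewrite -e inE b1 b2 => /andP [a1 _]; lia.
- case: (fB k kC) => _ a2 a3; case: (fB k' kC') => _ b2 b3.
  have : nth (g k, k) (enum E) (index k (enum D)) == nth (g k, k) (enum E) (index k' (enum D)).
    by rewrite -a2 -e b2 (set_nth_default (g k, k)).
  rewrite nth_uniq ?enum_uniq // => /eqP ei.
  have h1 : nth k (enum D) (index k (enum D)) = k by rewrite nth_index // mem_enum inE.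
  have h2 : nth k (enum D) (index k' (enum D)) = k' by rewrite nth_index // mem_enum inE.
  by rewrite -[LHS]h1 -[RHS]h2 ei.
Qed.

Lemma ord_wit N M (l : 'I_N -> nat) (k : 'I_M) : (M <= \sum_i l i)%N -> exists i0 : 'I_N, True.
Proof.
move=> hs; case: (pickP (fun _ : 'I_N => true)) => [i0 _|none]; first by exists i0.
have : (0 < \sum_i l i)%N by apply: leq_trans hs; apply: leq_ltn_trans (ltn_ord k).
by rewrite big1 // => i; have := none i.
Qed.

Lemma greedy_mono (R : realFieldType) N M (Uf : 'I_M -> {set 'I_N} -> R) :
  (forall k i A, Uf k A <= Uf k (i |: A)) ->
  forall S cs S', greedy_run Uf S cs S' -> throughput Uf S <= throughput Uf S'.
Proof.
move=> hm S cs S'; elim => [S0|S0 c cs0 S1 S2 st _ IH]; first exact: lexx.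
apply: le_trans IH; case: st => [[k _ [_ ->]]|[_ ->]] //.
apply: ler_sum => k'' _; rewrite ffunE; case: eqP => _ //.
Qed.

Lemma OPT_le (R : realFieldType) N M (Uf : 'I_M -> {set 'I_N} -> R) l B :
  0 <= B -> (forall S, throughput Uf S <= B) -> OPT Uf l <= B.
Proof.
move=> hB h; rewrite /OPT; apply: (big_ind (fun y => y <= B)) => //.
by move=> x y hx hy; rewrite ge_max hx hy.
Qed.

Lemma grp_ineq (R : realFieldType) (t L rho a b : R) :
  0 <= t -> t <= L * (rho - 1) -> L * (a + b) <= a -> 1 <= rho -> 0 <= a + b ->
  (1 + t) * (a + b) <= rho * a + b.
Proof.
move=> h1 h2 h3 h4 h5.
have k1 : 0 <= (L * (rho - 1) - t) * (a + b) by apply: mulr_ge0; lra.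
have k2 : 0 <= (rho - 1) * (a - L * (a + b)) by apply: mulr_ge0; lra.
nra.
Qed.

Theorem proposition2 (R : realFieldType) (N M : nat)
  (Pf Pm : 'I_N -> 'I_M -> R) (Tc : R) (pi0 gamma : 'I_M -> R)
  (l : 'I_N -> nat) :
  (forall i k, 0 <= Pf i k <= 1) ->
  (forall i k, 0 <= Pm i k <= 1) ->
  0 <= Tc < 1 ->
  (forall k, 0 <= pi0 k <= 1) ->
  (forall k, 0 < gamma k) ->
  (forall i, (l i <= M)%N) ->
  (M <= \sum_(i < N) l i)%N ->
  forall (g : 'I_M -> 'I_N) (Cl : 'I_N -> {set 'I_M}) (T : assignment N M),
    valid_partition (Uk Pf Pm Tc pi0 gamma) g ->
    valid_top (Uk Pf Pm Tc pi0 gamma) l g Cl ->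
    alg1_output (Uk Pf Pm Tc pi0 gamma) l T ->
    1 / 2 * mu (Uk Pf Pm Tc pi0 gamma) l g Cl * OPT (Uk Pf Pm Tc pi0 gamma) l
      <= throughput (Uk Pf Pm Tc pi0 gamma) T.
Proof.
move=> hf hm ht hp hg hl hs g Cl T hvp hvt halg.
set Uf := Uk Pf Pm Tc pi0 gamma.
have H : Hyp Pf Pm Tc pi0 gamma by split.
have Uge0 : forall k A, 0 <= Uf k A by move=> k A; exact: U_ge0.
have U0max : forall k : 'I_M,
    Num.max (theta2 gamma pi0 k) (theta1 Tc pi0 k) <= U0 Uf k.
  move=> k; have [i0 _] := ord_wit k hs.
  apply: (minover_ge (x0 := i0)); first by rewrite inE.
  by move=> x _; rewrite /U1; exact: U1_ge.
have U0pos : forall k, 0 < U0 Uf k.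
  by move=> k; have [_ _ c] := th_facts k ht hp hg; apply: lt_le_trans c (U0max k).
have Us_ge : forall k, U0 Uf k <= Ustar Uf k.
  move=> k; have [i0 _] := ord_wit k hs.
  apply: (le_trans (minover_le _ (x := i0) _)); first by rewrite inE.
  by apply: maxover_ge; rewrite inE.
have Us_le : forall k, Ustar Uf k <= U1 Uf k (g k).
  by move=> k; apply: (maxover_le (x0 := g k)); rewrite ?inE // => x _; apply: hvp.
have rho_ge1 : forall i, Cl i != set0 -> 1 <= rho Uf Cl i.
  move=> i /set0Pn [x xC]; apply: (minover_ge (x0 := x)) => // k _.
  by rewrite ler_pdivlMr // mul1r.
have mt_ge0 : forall i, 0 <= mu_term Uf l g Cl i.
  move=> i; rewrite /mu_term; case: ifP => // /negbT ne; apply: mulr_ge0.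
    by rewrite /lambda divr_ge0 // ler0n.
  by rewrite subr_ge0; exact: rho_ge1.
set t := minover [set i | (0 < rgrp g i)%N] (mu_term Uf l g Cl).
have t_ge0 : 0 <= t by apply: minover_ge0 => i _; exact: mt_ge0.
have mu_eq : mu Uf l g Cl = 1 + t by [].
have stepA : OPT Uf l <= 2 * \sum_k U0 Uf k.
  apply: OPT_le.
    by rewrite mulr_ge0 // sumr_ge0 // => k _; exact: ltW.
  move=> S; rewrite mulr_sumr; apply: ler_sum => k _.
  apply: (le_trans (U_le _ _ H)).
  have := U0max k; set m := Num.max _ _ => hmx.
  have h2 : theta2 gamma pi0 k <= m by rewrite le_max lexx.
  have h1 : theta1 Tc pi0 k <= m by rewrite le_max lexx orbT.
  lra.
pose V k := if k \in Cl (g k) then U1 Uf k (g k) else U0 Uf k.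
have eP : forall F : 'I_M -> R, \sum_k F k = \sum_i \sum_(k in Cgrp g i) F k.
  move=> F; rewrite (partition_big g xpredT) //; apply: eq_bigr => i _.
  by apply: eq_bigl => k; rewrite inE.
have stepB : (1 + t) * \sum_k U0 Uf k <= \sum_k V k.
  rewrite (eP (U0 Uf)) (eP V) mulr_sumr; apply: ler_sum => i _.
  have [sub cardCl ordCl] := hvt i.
  case: (posnP (rgrp g i)) => [r0|rpos].
    have C0 : Cgrp g i = set0 by apply: cards0_eq.
    by rewrite C0 !big_set0 mulr0.
  rewrite (big_setID (Cl i)) (setIidPr sub) [X in _ <= X](big_setID (Cl i)) (setIidPr sub) /=.
  have eD : \sum_(k in Cgrp g i :\: Cl i) V k = \sum_(k in Cgrp g i :\: Cl i) U0 Uf k.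
    apply: eq_bigr => k; rewrite !inE => /andP [nk gk].
    by rewrite /V (eqP gk) (negbTE nk).
  rewrite eD.
  have tle : t <= mu_term Uf l g Cl i by apply: minover_le; rewrite inE.
  case: (eqVneq (Cl i) set0) => [Cl0|ne].
    have t0 : t = 0.
      by apply/eqP; rewrite eq_le t_ge0 andbT; move: tle; rewrite /mu_term Cl0 eqxx.
    by rewrite t0 Cl0 !big_set0 addr0 mul1r.
  have eCl : rho Uf Cl i * \sum_(k in Cl i) U0 Uf k <= \sum_(k in Cl i) V k.
    rewrite mulr_sumr; apply: ler_sum => k kC.
    have gk : g k = i by have := subsetP sub k kC; rewrite inE => /eqP.
    rewrite /V gk kC.
    have r1 : rho Uf Cl i <= Ustar Uf k / U0 Uf k by apply: minover_le.
    apply: (@le_trans _ _ (Ustar Uf k / U0 Uf k * U0 Uf k)).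
      by apply: ler_wpM2r => //; exact: ltW.
    rewrite divfK ?gt_eqF //; rewrite -gk; exact: Us_le.
  apply: (le_trans _ (lerD eCl (lexx _))).
  apply: (@grp_ineq _ t (@lambda R N M l g i)) => //.
  - by move: tle; rewrite /mu_term (negbTE ne).
  - have eS : \sum_(k in Cgrp g i) U0 Uf k = \sum_(k in Cl i) U0 Uf k + \sum_(k in Cgrp g i :\: Cl i) U0 Uf k.
      by rewrite (big_setID (Cl i)) (setIidPr sub).
    rewrite /lambda -cardCl -eS; apply: avg => //.
  - exact: rho_ge1.
  - by rewrite addr_ge0 // sumr_ge0 // => k _; exact: ltW.
have hsub : forall i, Cl i \subset Cgrp g i by move=> i; case: (hvt i).
have hcard : forall i, (#|Cl i| <= l i)%N.
  by move=> i; case: (hvt i) => _ -> _; exact: geq_minl.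
have [m' [hm' hm'k]] := exists_matching hl hs hsub hcard.
have stepC : \sum_k V k <= weight Uf m'.
  apply: ler_sum => k _; have [c [mk hc]] := hm'k k; rewrite mk /V.
  case: ifP => kC; first by rewrite (hc kC).
  by apply: minover_le; rewrite inE.
have [m [ord [Sfin [hmw [huniq hord] hrun hT]]]] := halg.
have D1 : weight Uf m' <= weight Uf m by case: hmw => _; apply.
have D2 : weight Uf m <= throughput Uf (matched_assign m).
  apply: ler_sum => k _; rewrite ffunE; case: (m k) => [c|] //; exact: Uge0.
have D3 : throughput Uf (matched_assign m) <= throughput Uf Sfin.
  apply: greedy_mono hrun => k i A; exact: U_mono.
have D4 : throughput Uf Sfin <= throughput Uf T.
  move: hT; case: ifP => [hlt [kstar [hk ->]]| _ ->] //.
  apply: (le_trans (ltW hlt)).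
  apply: (@le_trans _ _ (Uf kstar [set: 'I_N])).
    by apply: (maxover_le (x0 := kstar)); rewrite ?inE // => x _; exact: hk.
  rewrite /throughput (bigD1 kstar) //= ffunE eqxx lerDl.
  by apply: sumr_ge0 => k _; exact: Uge0.
rewrite mu_eq.
apply: (@le_trans _ _ (1 / 2 * (1 + t) * (2 * \sum_k U0 Uf k))).
  by apply: ler_wpM2l => //; apply: mulr_ge0 => //; lra.
have -> : 1 / 2 * (1 + t) * (2 * \sum_k U0 Uf k) = (1 + t) * \sum_k U0 Uf k.
  by field.
apply: (le_trans stepB); apply: (le_trans stepC); apply: (le_trans D1).
by apply: (le_trans D2); apply: (le_trans D3).
Qed.
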